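(* Let $\varphi:\Lambda\to\Gamma$ be a regular covering map of finite simplicial graphs without isolated vertices. Then the group $\mathrm{FD}(\varphi)$ is commensurable to a subgroup of the Torelli group $\mathrm{IA}(A_\Lambda)$. More precisely, $\mathrm{FD}(\varphi)/(\mathrm{FD}(\varphi)\cap\mathrm{IA}(A_\Lambda))$ is isomorphic to $\mathrm{Deck}(\varphi)$.
   Context: Graphs are finite simplicial graphs; $A_\Gamma=\langle v\in V\Gamma\mid [u,v]=1\text{ for every edge }\{u,v\}\rangle$ is the right-angled Artin group. A covering map of graphs $\varphi:\Lambda\to\Gamma$ is a surjective simplicial map that maps the neighbours of each vertex $u$ bijectively onto the neighbours of $\varphi(u)$; $\mathrm{Deck}(\varphi)$ is the group of graph automorphisms $\mu$ of $\Lambda$ with $\varphi\mu=\varphi$, regarded as a subgroup of $\mathrm{Aut}(A_\Lambda)$ by permuting generators; $\varphi$ is regular if $\mathrm{Deck}(\varphi)$ acts transitively on each fiber. Let $\phi:A_\Lambda\to A_\Gamma$ be the induced homomorphism $u\mapsto\varphi(u)$. $\mathrm{FD}(\varphi)$ is the group of all $F\in\mathrm{Aut}(A_\Lambda)$ with $\phi\circ F=\phi$ (lifts of the identity of $A_\Gamma$). $\mathrm{IA}(A_\Lambda)$ is the kernel of the natural map $\mathrm{Aut}(A_\Lambda)\to\mathrm{GL}(H_1(A_\Lambda))$ given by the action on the abelianization. *)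

(* Defs.v *)
From mathcomp Require Import all_boot all_algebra all_fingroup.
Set Implicit Arguments. Unset Strict Implicit. Unset Printing Implicit Defensive.

Definition simple_graph (T : finType) (e : rel T) : Prop :=
  symmetric e /\ irreflexive e.

Definition no_isolated (T : finType) (e : rel T) : Prop :=
  forall u, exists v, e u v.

Definition covering_map (TL TG : finType) (eL : rel TL) (eG : rel TG)
    (f : TL -> TG) : Prop :=
  (forall y, exists x, f x = y) /\
  (forall u v, eL u v -> eG (f u) (f v)) /\
  (forall u, {in [pred v | eL u v] &, injective f}) /\
  (forall u w, eG (f u) w -> exists v, eL u v /\ f v = w).

Definition deck (TL TG : finType) (eL : rel TL) (f : TL -> TG) : {set {perm TL}} :=
  [set mu : {perm TL} | [forall u, forall v, eL (mu u) (mu v) == eL u v]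
                         && [forall u, f (mu u) == f u]].

Definition regular_covering (TL TG : finType) (eL : rel TL) (eG : rel TG)
    (f : TL -> TG) : Prop :=
  covering_map eL eG f /\
  forall u v, f u = f v -> exists2 mu, mu \in deck eL f & mu u = v.

(* Words in the generators V and their inverses: (x, false) = x, (x, true) = x^-1. *)
Definition word (T : Type) := seq (T * bool).

Definition winv (T : Type) (w : word T) : word T :=
  rev (map (fun p => (p.1, ~~ p.2)) w).

(* Equality in A_Gamma = < V | [u,v] = 1 for edges {u,v} >: the congruence on
   words generated by free cancellation and commutation of adjacent letters. *)
Inductive raag_eq (T : Type) (e : rel T) : word T -> word T -> Prop :=
| raag_refl w : raag_eq e w w
| raag_sym w1 w2 : raag_eq e w1 w2 -> raag_eq e w2 w1
| raag_trans w1 w2 w3 : raag_eq e w1 w2 -> raag_eq e w2 w3 -> raag_eq e w1 w3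
| raag_cancel w1 w2 x b :
    raag_eq e (w1 ++ [:: (x, b); (x, ~~ b)] ++ w2) (w1 ++ w2)
| raag_comm w1 w2 x y b c : e x y ->
    raag_eq e (w1 ++ [:: (x, b); (y, c)] ++ w2) (w1 ++ [:: (y, c); (x, b)] ++ w2).

Definition wsubst (T S : Type) (F : T -> word S) (w : word T) : word S :=
  flatten (map (fun p => if p.2 then winv (F p.1) else F p.1) w).

(* F : V -> A_Gamma (given by representative words) defines an endomorphism
   of A_Gamma iff the defining relations are preserved. *)
Definition raag_endo (T : Type) (e : rel T) (F : T -> word T) : Prop :=
  forall x y, e x y -> raag_eq e (F x ++ F y) (F y ++ F x).

Definition raag_aut (T : Type) (e : rel T) (F : T -> word T) : Prop :=
  raag_endo e F /\
  exists G, raag_endo e G /\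
    (forall x, raag_eq e (wsubst G (F x)) [:: (x, false)]) /\
    (forall x, raag_eq e (wsubst F (G x)) [:: (x, false)]).

Definition aut_eq (T : Type) (e : rel T) (F G : T -> word T) : Prop :=
  forall x, raag_eq e (F x) (G x).

Definition aut_comp (T : Type) (F G : T -> word T) : T -> word T :=
  fun x => wsubst F (G x).

Definition perm_aut (T : finType) (mu : {perm T}) : T -> word T :=
  fun x => [:: (mu x, false)].

Definition FD (TL TG : finType) (eL : rel TL) (eG : rel TG) (f : TL -> TG)
    (F : TL -> word TL) : Prop :=
  raag_aut eL F /\
  forall u, raag_eq eG (map (fun p => (f p.1, p.2)) (F u)) [:: (f u, false)].

(* Exponent sum of generator v in a word: the v-coordinate of its image in
   H_1(A_Gamma) = Z^V. *)
Definition expsum (T : eqType) (v : T) (w : word T) : int :=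
  \sum_(p <- w | p.1 == v) (if p.2 then (-1)%R else 1%R).

(* IA(A_Gamma): automorphisms acting trivially on H_1(A_Gamma) = Z^V. *)
Definition IA (T : finType) (e : rel T) (F : T -> word T) : Prop :=
  raag_aut e F /\
  forall u v, expsum v (F u) = (if u == v then 1%R else 0%R).

(* Main.v *)
Require Import Defs.
From mathcomp Require Import all_boot all_algebra all_fingroup.
From mathcomp Require Import ring.
Import GRing.Theory.
Local Open Scope ring_scope.

Definition sgn {T : Type} (p : T * bool) : int := if p.2 then -1 else 1.

Lemma expsumE (T : eqType) (v : T) (w : word T) :
  expsum v w = \sum_(p <- w) sgn p * (p.1 == v)%:R.
Proof.
rewrite /expsum big_mkcond; apply: eq_bigr => p _.
by case: (p.1 == v); rewrite ?mulr1 ?mulr0.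
Qed.

Lemma expsum_nil (T : eqType) (v : T) : expsum v [::] = 0.
Proof. by rewrite expsumE big_nil. Qed.

Lemma expsum_cons (T : eqType) (v : T) p (w : word T) :
  expsum v (p :: w) = sgn p * (p.1 == v)%:R + expsum v w.
Proof. by rewrite !expsumE big_cons. Qed.

Lemma expsum_cat (T : eqType) (v : T) (w1 w2 : word T) :
  expsum v (w1 ++ w2) = expsum v w1 + expsum v w2.
Proof. by rewrite !expsumE big_cat. Qed.

Lemma expsum_lin (T : finType) (w : word T) (g : T -> int) :
  \sum_(p <- w) sgn p * g p.1 = \sum_b expsum b w * g b.
Proof.
elim: w => [|p w IH].
  by rewrite big_nil big1 // => b _; rewrite expsum_nil mul0r.
rewrite big_cons IH.
under [RHS]eq_bigr => b _ do rewrite expsum_cons mulrDl.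
rewrite big_split /=; congr (_ + _).
rewrite (bigD1 p.1) //= eqxx mulr1 big1 ?addr0 // => b nb.
by rewrite eq_sym (negbTE nb) mulr0 mul0r.
Qed.

Lemma expsum_map (T TG : finType) (f : T -> TG) (z : TG) (w : word T) :
  expsum z (map (fun p => (f p.1, p.2)) w) = \sum_(a | f a == z) expsum a w.
Proof.
rewrite expsumE big_map /=.
have := @expsum_lin _ w (fun a => (f a == z)%:R : int); rewrite /= => ->.
rewrite [RHS]big_mkcond; apply: eq_bigr => b _.
by case: (f b == z); rewrite ?mulr1 ?mulr0.
Qed.

Lemma expsum_winv (T : eqType) (v : T) (w : word T) :
  expsum v (winv w) = - expsum v w.
Proof.
rewrite /winv !expsumE big_rev big_map -sumrN; apply: eq_bigr => -[x b] _.
by rewrite /sgn /=; case: b; rewrite /= ?opprK ?mulNr ?mul1r ?mulN1r ?opprK.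
Qed.

Lemma expsum_wsubst (T : finType) (F : T -> word T) (v : T) (w : word T) :
  expsum v (wsubst F w) = \sum_b expsum b w * expsum v (F b).
Proof.
rewrite -expsum_lin; elim: w => [|p w IH]; first by rewrite big_nil expsum_nil.
rewrite big_cons -IH /wsubst /= expsum_cat; congr (_ + _).
by rewrite /sgn; case: p.2; rewrite ?expsum_winv ?mulN1r ?mul1r.
Qed.

Lemma raag_expsum (T : eqType) (e : rel T) (w1 w2 : word T) (v : T) :
  raag_eq e w1 w2 -> expsum v w1 = expsum v w2.
Proof.
elim=> {w1 w2}.
- by [].
- by move=> w1 w2 _ ->.
- by move=> w1 w2 w3 _ -> _ ->.
- move=> w1 w2 x b; rewrite !expsum_cat !expsum_cons expsum_nil /sgn /=.
  by case: b => /=; ring.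
- move=> w1 w2 x y b c _; rewrite !expsum_cat !expsum_cons expsum_nil; ring.
Qed.

Fixpoint hN {T : eqType} (a b : T) (w : word T) : int :=
  match w with
  | [::] => 0
  | p :: w' => sgn p * (p.1 == a)%:R * expsum b w' + hN a b w'
  end.

Lemma hN_cat (T : eqType) (a b : T) (w1 w2 : word T) :
  hN a b (w1 ++ w2) = hN a b w1 + hN a b w2 + expsum a w1 * expsum b w2.
Proof.
elim: w1 => [|p w1 IH] /=; first by rewrite expsum_nil; ring.
rewrite IH expsum_cat expsum_cons; ring.
Qed.

Lemma raag_hN (T : eqType) (e : rel T) (a b : T) (w1 w2 : word T) :
  a != b -> ~~ e a b -> ~~ e b a -> raag_eq e w1 w2 -> hN a b w1 = hN a b w2.
Proof.
move=> nab eab eba; elim=> {w1 w2}.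
- by [].
- by move=> w1 w2 _ ->.
- by move=> w1 w2 w3 _ -> _ ->.
- move=> w1 w2 x c; rewrite !hN_cat !expsum_cat /= !expsum_cons !expsum_nil.
  have h : (x == a)%:R * (x == b)%:R = 0 :> int.
    by case: (x =P a) => [->|]; rewrite ?(negbTE nab) ?mulr0 ?mul0r.
  move: h; move: ((x == a)%:R : int) ((x == b)%:R : int) => A B h.
  rewrite /sgn /=; case: c => /=;
  (transitivity (hN a b w1 + hN a b w2 + expsum a w1 * expsum b w2 - A * B);
    [ring | by rewrite h subr0]).
- move=> w1 w2 x y c d exy; rewrite !hN_cat !expsum_cat /= !expsum_cons !expsum_nil.
  have h1 : (x == a)%:R * (y == b)%:R = 0 :> int.
    case: (x =P a) => [xa|]; last by rewrite mul0r.
    case: (y =P b) => [yb|]; last by rewrite mulr0.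
    by subst; rewrite exy in eab.
  have h2 : (y == a)%:R * (x == b)%:R = 0 :> int.
    case: (y =P a) => [ya|]; last by rewrite mul0r.
    case: (x =P b) => [xb|]; last by rewrite mulr0.
    by subst; rewrite exy in eba.
  have e1 : sgn (x, c) * (x == a)%:R * (sgn (y, d) * (y == b)%:R) = 0
    by rewrite mulrACA h1 mulr0.
  have e2 : sgn (y, d) * (y == a)%:R * (sgn (x, c) * (x == b)%:R) = 0
    by rewrite mulrACA h2 mulr0.
  rewrite !addr0 e1 e2; ring.
Qed.

Lemma core (T TG : finType) (e : rel T) (f : T -> TG) (M N : T -> T -> int) :
  irreflexive e -> symmetric e ->
  (forall a b, e a b -> f a != f b) ->
  (forall d a a', e d a -> e d a' -> f a = f a' -> a = a') ->
  (forall u, exists v, e u v) ->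
  (forall u z, \sum_(a | f a == z) M a u = (f u == z)%:R) ->
  (forall u v, e u v -> forall a b, a != b -> ~~ e a b ->
     M a u * M b v = M b u * M a v) ->
  (forall x b, \sum_a N b a * M a x = (x == b)%:R) ->
  exists s : {perm T}, (forall u a, M a u = (s u == a)%:R) /\
    (forall u, f (s u) = f u) /\ (forall u v, e (s u) (s v) = e u v).
Proof.
move=> irr sym Hfib Hinj Hiso H1 H2 H3.
have nd : forall u v, e u v -> exists b c, M b u * M c v - M c u * M b v != 0.
  move=> u v euv.
  case: (boolP [exists b, exists c, M b u * M c v - M c u * M b v != 0]).
    by move=> /existsP[b /existsP[c H]]; exists b, c.
  move=> /existsPn H0; exfalso.
  have H0' : forall b c, M b u * M c v = M c u * M b v.
    move=> b c; move: (H0 b) => /existsPn /(_ c); rewrite negbK subr_eq0.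
    by move/eqP.
  have uv : u != v by apply/eqP => uv; subst; rewrite irr in euv.
  have E : (\sum_a N u a * M a u) * (\sum_b N v b * M b v)
         - (\sum_a N u a * M a v) * (\sum_b N v b * M b u)
         = \sum_a \sum_b (N u a * N v b * (M a u * M b v - M a v * M b u)).
    rewrite !mulr_suml -sumrB; apply: eq_bigr => a _.
    rewrite !mulr_sumr -sumrB; apply: eq_bigr => b _; ring.
  move: E; rewrite !H3 !eqxx (negbTE uv) eq_sym (negbTE uv).
  rewrite big1 => [|a _]; last first.
    by rewrite big1 // => b _; rewrite H0' [M b u * _]mulrC subrr mulr0.
  by rewrite mulr0 subr0 mulr1.
have fib : forall u a a', a != a' -> f a = f a' -> M a u != 0 -> M a' u != 0 -> False.
  move=> u a a' naa' fa Ma Ma'.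
  have [v euv] := Hiso u.
  pose det p q := M p u * M q v - M q u * M p v.
  have det0 : forall p q, p != q -> ~~ e p q -> det p q = 0.
    by move=> p q pq epq; rewrite /det (H2 _ _ euv _ _ pq epq) subrr.
  have idt : forall p q r, M p u * det q r = M q u * det p r - M r u * det p q.
    by move=> p q r; rewrite /det; ring.
  have adj : forall p q, det p q != 0 -> e p q.
    move=> p q; case: (boolP (p == q)) => [/eqP -> | pq].
      by rewrite /det subrr eqxx.
    by case: (boolP (e p q)) => // epq; rewrite det0.
  have [b [c Hbc]] := nd u v euv.
  have Hbc' : det b c != 0 := Hbc.
  have naa'e : ~~ e a a' by apply/negP => /Hfib; rewrite fa eqxx.
  have da'a : det a' a = 0.
    by apply: det0; rewrite 1?eq_sym // sym.
  have [d Hd] : exists d, det a d != 0.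
    case: (boolP (det a b == 0)) => [/eqP hb|hb]; last by exists b.
    case: (boolP (det a c == 0)) => [/eqP hc|hc]; last by exists c.
    exfalso; move: (idt a b c); rewrite hb hc !mulr0 subrr => /eqP.
    by rewrite mulf_eq0 (negbTE Ma) (negbTE Hbc').
  have Hd' : det a' d != 0.
    move: (idt a' a d); rewrite da'a mulr0 subr0 => H.
    apply/eqP => h0; move: H; rewrite h0 mulr0 => /eqP.
    by rewrite mulf_eq0 (negbTE Ma') (negbTE Hd).
  have ead := adj _ _ Hd; have ead' := adj _ _ Hd'.
  rewrite sym in ead; rewrite sym in ead'.
  by move: naa'; rewrite (Hinj d a a' ead ead' fa) eqxx.
have fibsum : forall u a, M a u != 0 -> \sum_(b | f b == f a) M b u = M a u.
  move=> u a Ma; rewrite (bigD1 a) //= big1 ?addr0 // => b /andP[/eqP fb nb].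
  case: (boolP (M b u == 0)) => [/eqP //|Mb]; exfalso.
  exact: (fib u b a nb fb Mb Ma).
have col : forall u, exists a, [forall a', M a' u == (a == a')%:R] && (f a == f u).
  move=> u.
  have Hs := H1 u (f u); rewrite eqxx in Hs.
  have [a [fa Ma]] : exists a, f a = f u /\ M a u != 0.
    case: (boolP [exists a, (f a == f u) && (M a u != 0)]).
      by move=> /existsP[a /andP[/eqP ? ?]]; exists a.
    move=> /existsPn H0; exfalso; move: Hs; rewrite big1 // => a /eqP fa.
    by move: (H0 a); rewrite fa eqxx /= negbK => /eqP.
  exists a; rewrite fa eqxx andbT; apply/forallP => a'.
  case: (boolP (a == a')) => [/eqP <-|na].
    by rewrite -(fibsum u a Ma) fa Hs.
  case: (boolP (M a' u == 0)) => // Ma'; exfalso.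
  case: (boolP (f a' == f a)) => [/eqP faa|faa].
    by apply: (fib u a' a _ faa Ma' Ma); rewrite eq_sym.
  move: (H1 u (f a')); rewrite (fibsum u a' Ma') -fa eq_sym (negbTE faa).
  by move/eqP; rewrite (negbTE Ma').
pose s0 u := xchoose (col u).
have Ms0 : forall u a, M a u = (s0 u == a)%:R.
  move=> u a; have /andP[/forallP H _] := xchooseP (col u).
  exact/eqP/H.
have fs0 : forall u, f (s0 u) = f u.
  by move=> u; have /andP[_ /eqP] := xchooseP (col u).
have NM : forall u x, N u (s0 x) = (x == u)%:R.
  move=> u x; rewrite -H3; under eq_bigr => a _ do rewrite Ms0.
  rewrite (bigD1 (s0 x)) //= eqxx mulr1 big1 ?addr0 // => a na.
  by rewrite eq_sym (negbTE na) mulr0.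
have s0inj : injective s0.
  move=> u u' h; have := NM u u'; rewrite -h NM eqxx.
  by case: (u' =P u).
pose s := perm s0inj.
have fwd : forall u v, e u v -> e (s u) (s v).
  move=> u v euv; rewrite !permE; apply/negPn/negP => ne.
  have nuv : s0 u != s0 v.
    by apply/eqP => /s0inj h; subst; rewrite irr in euv.
  have := H2 u v euv (s0 u) (s0 v) nuv ne.
  by rewrite !Ms0 !eqxx (negbTE nuv) eq_sym (negbTE nuv) mul0r mulr1.
have bwd : forall u v, e (s u) (s v) -> e u v.
  pose E := [set p : T * T | e p.1 p.2].
  pose g := fun p : T * T => (s p.1, s p.2).
  have ginj : injective g.
    by move=> [p1 p2] [q1 q2] [/perm_inj -> /perm_inj ->].
  have sub : g @: E \subset E.
    by apply/subsetP => _ /imsetP[p pE ->]; rewrite inE /= in pE; rewrite inE /=; apply: fwd.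
  have eqE : g @: E = E.
    by apply/eqP; rewrite eqEcard sub card_imset // leqnn.
  move=> u v h; have : (s u, s v) \in E by rewrite inE.
  rewrite -eqE => /imsetP[[p1 p2] pE [/perm_inj h1 /perm_inj h2]].
  by move: pE; rewrite inE /= -h1 -h2.
exists s; split; first by move=> u a; rewrite permE Ms0.
split; first by move=> u; rewrite permE fs0.
by move=> u v; apply/idP/idP; [apply: bwd | apply: fwd].
Qed.
Set Implicit Arguments. Unset Strict Implicit.
Definition spec (T : finType) (F : T -> word T) (s : {perm T}) :=
  [forall u, forall v, expsum v (F u) == (s u == v)%:R].

Definition psi (T : finType) (F : T -> word T) : {perm T} :=
  odflt 1%g [pick s | spec F s].

Lemma psiE (T : finType) (F : T -> word T) s : spec F s -> psi F = s.
Proof.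
move=> Hs; rewrite /psi; case: pickP => [s' Hs' | H]; last by move: (H s); rewrite Hs.
apply/permP => u /=.
move/forallP/(_ u)/forallP/(_ (s' u))/eqP: Hs => h.
move/forallP/(_ u)/forallP/(_ (s' u))/eqP: Hs' => h'.
by move: h; rewrite h' eqxx; case: (s u =P s' u).
Qed.

Lemma FD_spec (TL TG : finType) (eL : rel TL) (eG : rel TG) (f : TL -> TG)
    (F : TL -> word TL) :
  simple_graph eL -> simple_graph eG -> no_isolated eL ->
  covering_map eL eG f -> FD eL eG f F ->
  exists2 s, s \in deck eL f & spec F s.
Proof.
move=> [symL irrL] [symG irrG] noiso [_ [edg [inj _]]] [[endo [G [_ [GF _]]]] Hphi].
have := @core TL TG eL f (fun a u => expsum a (F u)) (fun b a => expsum b (G a))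
  irrL symL.
case.
- move=> a b eab; apply/eqP => fab; have := edg _ _ eab; rewrite fab irrG.
  by [].
- move=> d a a' eda eda' faa; exact: (inj d a a' eda eda' faa).
- exact: noiso.
- move=> u z; rewrite -expsum_map (@raag_expsum _ _ _ _ z (Hphi u)).
  by rewrite expsum_cons expsum_nil /sgn /= mul1r addr0.
- move=> u v euv a b nab eab.
  have eba : ~~ eL b a by rewrite symL.
  have := @raag_hN _ _ a b _ _ nab eab eba (endo u v euv); rewrite !hN_cat.
  rewrite [hN a b (F v) + _]addrC => /addrI ->; exact: mulrC.
- move=> x b; transitivity (expsum b [:: (x, false)]); last first.
    by rewrite expsum_cons expsum_nil /sgn /= mul1r addr0.
  rewrite -(@raag_expsum _ _ _ _ b (GF x)) expsum_wsubst.
  by apply: eq_bigr => a _; rewrite mulrC.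
move=> s [Ms [fs es]]; exists s.
  rewrite inE; apply/andP; split; apply/forallP => u; last by rewrite fs.
  by apply/forallP => v; rewrite es.
by apply/forallP => u; apply/forallP => v; rewrite Ms.
Qed.

Theorem theorem7p3 (TL TG : finType) (eL : rel TL) (eG : rel TG)
    (f : TL -> TG) :
  simple_graph eL -> simple_graph eG ->
  no_isolated eL -> no_isolated eG ->
  regular_covering eL eG f ->
  exists psi : (TL -> word TL) -> {perm TL},
    (forall F, FD eL eG f F -> psi F \in deck eL f) /\
    (forall F G, FD eL eG f F -> FD eL eG f G -> aut_eq eL F G -> psi F = psi G) /\
    (forall F G, FD eL eG f F -> FD eL eG f G ->
       forall u, psi (aut_comp F G) u = psi F (psi G u)) /\
    (forall mu, mu \in deck eL f -> exists2 F, FD eL eG f F & psi F = mu) /\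
    (forall F, FD eL eG f F -> (psi F = 1%g <-> IA eL F)).
Proof.
move=> sL sG nL nG [cov _].
have HS := fun F => @FD_spec TL TG eL eG f F sL sG nL cov.
exists (@psi TL); split.
  by move=> F /HS[s sd /psiE ->].
split.
  move=> F G /HS[s _ Hs] _ FG; rewrite (psiE Hs); symmetry; apply: psiE.
  apply/forallP => u; apply/forallP => v.
  by rewrite -(@raag_expsum _ _ _ _ v (FG u)); move/forallP/(_ u)/forallP/(_ v): Hs.
split.
  move=> F G /HS[s _ Hs] /HS[t _ Ht] u.
  rewrite (psiE Hs) (psiE Ht) (@psiE _ _ (t * s)%g) ?permM //.
  apply/forallP => x; apply/forallP => v; rewrite /aut_comp expsum_wsubst.
  under eq_bigr => b _ do
    rewrite (eqP (forallP (forallP Ht x) b)) (eqP (forallP (forallP Hs b) v)).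
  rewrite (bigD1 (t x)) //= eqxx mul1r big1 ?addr0 ?permM // => b nb.
  by rewrite eq_sym (negbTE nb) mul0r.
split.
  move=> mu mud; exists (perm_aut mu); last first.
    apply: psiE; apply/forallP => u; apply/forallP => v.
    by rewrite /perm_aut expsum_cons expsum_nil /sgn /= mul1r addr0.
  move: mud; rewrite inE => /andP[/forallP me /forallP mf].
  have mue : forall (m : {perm TL}), (forall u v, eL (m u) (m v) = eL u v) ->
      raag_endo eL (perm_aut m).
    move=> m hm x y exy; rewrite /perm_aut.
    have h : eL (m x) (m y) by rewrite hm.
    exact: (@raag_comm _ eL [::] [::] (m x) (m y) false false h).
  have me' : forall u v, eL (mu u) (mu v) = eL u v.
    by move=> u v; apply/eqP; move: (me u) => /forallP.
  split; last first.
    move=> u; rewrite /perm_aut /=; rewrite (eqP (mf u)); exact: raag_refl.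
  split; first exact: mue.
  exists (perm_aut mu^-1); split.
    apply: mue => u v; rewrite -me'; by rewrite !permKV.
  split => x; rewrite /wsubst /perm_aut /= ?cats0 ?permK ?permKV; exact: raag_refl.
move=> F FF; split.
  have [s _ Hs] := HS F FF; rewrite (psiE Hs) => s1.
  split; first exact: FF.1.
  move=> u v; move/forallP/(_ u)/forallP/(_ v)/eqP: Hs => ->.
  by rewrite s1 perm1; case: (u == v).
move=> [_ HI]; apply: psiE; apply/forallP => u; apply/forallP => v.
by rewrite HI perm1; case: (u == v).
Qed.
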